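(* Fix integers $d\ge 1$ and $n\ge 1$. Then $$\sum_{\lambda\in\mathcal{H}_n} |\{i: 1\le i<\ell(\lambda),\ \lambda_i-\lambda_{i+1}<d\}| \;\ge\; \sum_{\lambda\in\mathcal{H}_n} |\{i: 1\le i\le \ell(\lambda),\ \lambda_i\not\equiv 1 \pmod{d+1}\}|.$$ That is, the total number of indices $i$ with $1\le i<\ell(\lambda)$ and $\lambda_i-\lambda_{i+1}<d$, over all $\lambda\in\mathcal{H}_n$, is at least the total number of parts not congruent to $1$ modulo $d+1$, over all $\lambda\in\mathcal{H}_n$.
   Context: A partition is a finite nonempty weakly decreasing sequence $\lambda=(\lambda_1,\ldots,\lambda_k)$ of positive integers; $\ell(\lambda)=k$ is its number of parts. The perimeter of $\lambda$ is $\Gamma(\lambda)=\lambda_1+\ell(\lambda)-1$, and $\mathcal{H}_n$ is the set of partitions with perimeter $n$. *)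

(* Defs.v *)
From mathcomp Require Import all_boot.
Set Implicit Arguments. Unset Strict Implicit. Unset Printing Implicit Defensive.

Definition is_partition (s : seq nat) : bool :=
  [&& s != [::], 0 \notin s & sorted geq s].

Definition perimeter (s : seq nat) : nat := head 0 s + size s - 1.

Definition inH (n : nat) (s : seq nat) : bool :=
  is_partition s && (perimeter s == n).

(* |{ i : 1 <= i < ell(lambda), lambda_i - lambda_{i+1} < d }|
   (0-based indices i = 0 .. size s - 2). *)
Definition small_gaps (d : nat) (s : seq nat) : nat :=
  count (fun i => nth 0 s i - nth 0 s i.+1 < d) (iota 0 (size s).-1).

Definition parts_not_1_mod (d : nat) (s : seq nat) : nat :=
  count (fun x => x != 1 %[mod d.+1]) s.

(* Sum of f over H_n.  Every lambda in H_n has ell(lambda) <= n and all parts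
   <= n, so it occurs exactly once as a k.-tuple of 'I_n.+1 with k <= n. *)
Definition sumH (n : nat) (f : seq nat -> nat) : nat :=
  \sum_(k < n.+1) \sum_(t : k.-tuple 'I_n.+1 | inH n (map val t)) f (map val t).

(* Main.v *)
Require Import Defs.
From mathcomp Require Import all_boot zify.
Set Implicit Arguments. Unset Strict Implicit. Unset Printing Implicit Defensive.

Fixpoint Hf (k n : nat) : seq (seq nat) :=
  if k is k'.+1 then
    match n with 0 => [::] | _ =>
    [:: n] :: flatten [seq [seq (head 0 m + c - 1) :: m | m <- Hf k' (n - c)] | c <- index_iota 1 n]
    end
  else [::].

Lemma Hf_fuel k k' n : n <= k -> n <= k' -> Hf k n = Hf k' n.
Proof.
elim: k k' n => [|k IH] [|k'] [|n] //= h1 h2.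
congr cons; congr flatten. apply/eq_in_map => c; rewrite mem_index_iota => /andP[c1 cn].
congr map; apply: IH; lia.
Qed.

Definition Hl n := Hf n n.

Lemma HlE n : Hl n = if n is 0 then [::] else
  [:: n] :: flatten [seq [seq (head 0 m + c - 1) :: m | m <- Hl (n - c)] | c <- index_iota 1 n].
Proof.
case: n => // n; rewrite /Hl /=.
congr cons; congr flatten; apply/eq_in_map => c; rewrite mem_index_iota => /andP[c1 cn].
congr map; apply: Hf_fuel; lia.
Qed.

Lemma sumHl n (F : seq nat -> nat) : 0 < n ->
  \sum_(s <- Hl n) F s = F [:: n] + \sum_(1 <= c < n) \sum_(m <- Hl (n - c)) F (head 0 m + c - 1 :: m).
Proof.
case: n => // n _; rewrite HlE big_cons big_flatten /= big_map; congr (_ + _).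
by apply: eq_bigr => c _; rewrite big_map.
Qed.

Lemma inH_single n : 0 < n -> inH n [:: n].
Proof. move=> n0; rewrite /inH /is_partition /perimeter /= inE; lia. Qed.

Lemma inH_consE n c m : 1 <= c < n -> inH (n - c) m -> inH n (head 0 m + c - 1 :: m).
Proof.
case: m => [|y m] hc; first by rewrite /inH /is_partition.
rewrite /inH /is_partition /perimeter /= !inE negb_or.
case/andP => /andP[/andP[hy h0] hs] /eqP hp.
rewrite !negb_or h0 hs !andbT; apply/andP; split.
- apply/andP; split; lia.
- apply/eqP; lia.
Qed.

Lemma inH_decomp n s : inH n s -> s = [:: n] \/
  exists c m, [/\ 1 <= c < n, inH (n - c) m & s = head 0 m + c - 1 :: m].
Proof.
case: s => [|a [|y m]]; first by rewrite /inH /is_partition.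
  rewrite /inH /perimeter /= => /andP[_ /eqP <-]; left; congr (_ :: _); lia.
rewrite /inH /is_partition /perimeter /= !inE !negb_or.
case/andP => /andP[/and3P[ha hy h0] /andP[hay hs]] /eqP hp.
right; exists (a - y + 1), (y :: m); split => /=.
- lia.
- rewrite inE negb_or hy h0 hs /=; apply/eqP; lia.
- congr (_ :: _); lia.
Qed.

Lemma inH_pos n s : inH n s -> 0 < n /\ s != [::].
Proof.
case: s => [|a s]; first by rewrite /inH /is_partition.
rewrite /inH /is_partition /perimeter /= inE negb_or => /andP[/andP[/andP[ha _] _] /eqP hp].
split=> //; lia.
Qed.

Lemma Hl_mem n s : (s \in Hl n) = inH n s.
Proof.
elim/ltn_ind: n s => n IH s.
case: n IH => [|n] IH.
  rewrite HlE in_nil; symmetry; apply/negbTE; apply/negP => /inH_pos [] //.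
rewrite HlE in_cons; apply/idP/idP.
- case/orP => [/eqP -> | ]; first exact: inH_single.
  case/flattenP => x /mapP [c hc ->] /mapP [m hm ->].
  rewrite mem_index_iota in hc.
  apply: inH_consE => //; rewrite -IH //; lia.
- move/inH_decomp => [-> | [c [m [hc hm ->]]]]; first by rewrite eqxx.
  apply/orP; right; apply/flattenP.
  exists [seq (head 0 m0 + c - 1) :: m0 | m0 <- Hl (n.+1 - c)].
    by apply/mapP; exists c => //; rewrite mem_index_iota.
  apply/map_f; rewrite IH //; lia.
Qed.

Lemma uniq_flatten_map (T U : eqType) (F : T -> seq U) r : uniq r ->
  (forall i, i \in r -> uniq (F i)) ->
  (forall i j x, i \in r -> j \in r -> x \in F i -> x \in F j -> i = j) ->
  uniq (flatten (map F r)).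
Proof.
elim: r => //= i r IH /andP[ir ur] hu hd.
rewrite cat_uniq hu ?inE ?eqxx //= IH //; last first.
- by move=> a b x ha hb; apply: hd; rewrite inE ?ha ?hb orbT.
- by move=> a ha; apply: hu; rewrite inE ha orbT.
rewrite andbT; apply/hasPn => x /flattenP [y /mapP [j hj ->] hx].
apply/negP => hx'.
have := hd i j x; rewrite !inE eqxx hj orbT => /(_ isT isT hx' hx) ij.
by move: ir; rewrite ij hj.
Qed.

Lemma Hl_uniq n : uniq (Hl n).
Proof.
elim/ltn_ind: n => n IH.
case: n IH => [|n] IH; first by rewrite HlE.
rewrite HlE cons_uniq; apply/andP; split.
  apply/negP => /flattenP [x /mapP [c hc ->] /mapP [m hm]] [_ em].
  by move: hm; rewrite -em Hl_mem => /inH_pos [].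
apply: uniq_flatten_map.
- exact: iota_uniq.
- move=> c hc; rewrite map_inj_uniq ?IH //.
    by rewrite mem_index_iota in hc; lia.
  by move=> m1 m2 [].
- move=> i j x; rewrite !mem_index_iota => hi hj /mapP [m1 h1 ->] /mapP [m2 h2 [_ e]].
  move: h1 h2; rewrite e !Hl_mem /inH => /andP[_ /eqP p1] /andP[_ /eqP p2].
  lia.
Qed.

Lemma inH_bound n s : inH n s -> all (fun x => x < n.+1) s /\ size s < n.+1.
Proof.
case: s => [|a s]; first by rewrite /inH /is_partition.
rewrite /inH /is_partition /perimeter /= inE negb_or => /andP[/andP[/andP[ha _] hs] /eqP hp].
have hal : all (geq a) s.
  apply: order_path_min hs => x y z hyx hzy /=; exact: leq_trans hzy hyx.
split; last lia.
rewrite /= ltnS; apply/andP; split; first lia.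
apply/allP => x hx; have := allP hal x hx => /= hxa; lia.
Qed.

Lemma sum_k n k (f : seq nat -> nat) :
  \sum_(t : k.-tuple 'I_n.+1 | inH n (map val t)) f (map val t)
  = \sum_(s <- Hl n | size s == k) f s.
Proof.
rewrite -(big_map (fun t : k.-tuple 'I_n.+1 => map val t) (fun s => inH n s) f).
rewrite -[LHS]big_filter -[RHS]big_filter; apply: perm_big; apply: uniq_perm.
- rewrite filter_uniq // map_inj_uniq ?index_enum_uniq //.
  by move=> t1 t2 /(inj_map val_inj) /val_inj.
- by rewrite filter_uniq // Hl_uniq.
move=> s; rewrite !mem_filter Hl_mem; apply/andP/andP.
- case=> hs /mapP [t _ es]; split=> //; by rewrite es size_map size_tuple.
- case=> /eqP hk hs; split=> //; apply/mapP.
  have [hb _] := inH_bound hs.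
  have hsz : size (map (@inord n) s) == k by rewrite size_map hk.
  exists (Tuple hsz); first exact: mem_index_enum.
  rewrite /= -map_comp -{1}(map_id s); apply/eq_in_map => x hx /=.
  by rewrite inordK //; exact: (allP hb).
Qed.

Lemma sumH_Hl n (f : seq nat -> nat) : sumH n f = \sum_(s <- Hl n) f s.
Proof.
rewrite /sumH (eq_bigr (fun k : 'I_n.+1 => \sum_(s <- Hl n | size s == k) f s)); last by move=> k _; exact: sum_k.
under eq_bigr do rewrite big_mkcond.
rewrite exchange_big /= big_seq [RHS]big_seq; apply: eq_bigr => s hs.
rewrite Hl_mem in hs; have [_ hsz] := inH_bound hs.
rewrite -big_mkcond (big_pred1 (Ordinal hsz)) // => j /=.
Qed.

Definition V (g : nat -> nat) n x := \sum_(s <- Hl n) g (head 0 s + x).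

Lemma V_rec g n x : 0 < n ->
  V g n x = g (n + x) + \sum_(1 <= c < n) V g (n - c) (x + c - 1).
Proof.
move=> n0; rewrite /V sumHl //=; congr (_ + _).
apply: eq_big_nat => c /andP[c1 cn]; apply: eq_bigr => m _; congr g; lia.
Qed.

Lemma V_pascal g n x : V g n.+2 x = V g n.+1 x + V g n.+1 x.+1.
Proof.
rewrite V_rec // big_nat_recl // [V g n.+1 x.+1]V_rec //.
have -> : n.+2 - 1 = n.+1 by lia.
have -> : x + 1 - 1 = x by lia.
rewrite addnCA; congr (_ + (_ + _)); first (congr g; lia).
apply: eq_big_nat => c /andP[c1 cn]; congr V; lia.
Qed.

Lemma V1 g x : V g 1 x = g (1 + x).
Proof. by rewrite /V HlE /= big_cons big_nil addn0. Qed.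

Lemma V_const n x : 0 < n -> V (fun _ => 1) n x = 2 ^ n.-1.
Proof.
elim: n x => [|n IH] x // _.
case: n IH => [|n] IH; first by rewrite V1.
by rewrite V_pascal !IH // expnS mul2n addnn.
Qed.

Lemma V_pos g n x k : k < n -> 0 < g (k + 1 + x) -> 0 < V g n x.
Proof.
elim: n x k => [|n IH] x k // hk hg.
case: n IH hk => [|n] IH hk.
  rewrite V1; have k0 : k = 0 by lia.
  by move: hg; rewrite k0 add0n.
rewrite V_pascal addn_gt0; case: (ltnP k n.+1) => hkn.
  by rewrite (IH x k).
apply/orP; right; apply: (IH x.+1 k.-1); first lia.
by have -> : k.-1 + 1 + x.+1 = k + 1 + x by lia.
Qed.

Lemma V_big g n x q : 0 < q -> q <= n ->
  (forall x, exists2 k, k < q & 0 < g (k + 1 + x)) -> 2 ^ (n - q) <= V g n x.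
Proof.
move=> q0 qn hg; elim: n qn x => [|n IH] qn x; first lia.
case: (ltnP q n.+1) => hq; last first.
  have -> : n.+1 - q = 0 by lia.
  have [k hk hgk] := hg x; apply: (V_pos (k := k)) => //; lia.
case: n IH qn hq => [|n] IH qn hq; first lia.
rewrite V_pascal; have -> : n.+2 - q = (n.+1 - q).+1 by lia.
by rewrite expnS mul2n -addnn leq_add ?IH.
Qed.

Section Main.
Variable d : nat.
Hypothesis hd : 1 <= d.

Definition gq (y : nat) : nat := (y == 1 %[mod d.+1]).
Definition gn (y : nat) : nat := (y != 1 %[mod d.+1]).

Lemma gq_ex x : exists2 k, k < d.+1 & 0 < gq (k + 1 + x).
Proof.
exists ((d.+1 - x %% d.+1) %% d.+1); first by rewrite ltn_pmod.
rewrite /gq lt0b; apply/eqP.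
have h0 : ((d.+1 - x %% d.+1) %% d.+1 + x) %% d.+1 = 0.
  rewrite modnDml -modnDmr subnK ?modnn //.
  by apply: ltnW; rewrite ltn_pmod.
by rewrite addnAC -modnDml h0.
Qed.

Lemma Z_big n : 0 < n -> 2 ^ (n - d.+1) <= V gq n 0.
Proof.
move=> n0; case: (leqP d.+1 n) => hn.
  apply: V_big => // x; apply: gq_ex.
have -> : n - d.+1 = 0 by lia.
  by apply: (V_pos (k := 0)) => //; rewrite /gq add0n addn0 eqxx.
Qed.

Lemma AZ n : V gn n 0 + V gq n 0 = V (fun _ => 1) n 0.
Proof.
rewrite /V -big_split; apply: eq_bigr => s _.
by rewrite /gn /gq; case: (_ == _).
Qed.

Lemma J_closed n : 0 < n ->
  1 + \sum_(1 <= c < n) (d < c) * 2 ^ (n - c).-1 = 2 ^ (n - d.+1).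
Proof.
elim: n => [|n IH] // _.
case: n IH => [|n] IH; first by rewrite big_geq // expn0.
rewrite big_nat_recr //=.
have -> : \sum_(1 <= c < n.+1) (d < c) * 2 ^ (n.+2 - c).-1
        = 2 * \sum_(1 <= c < n.+1) (d < c) * 2 ^ (n.+1 - c).-1.
  rewrite big_distrr; apply: eq_big_nat => c /andP[c1 cn] /=.
  have -> : (n.+2 - c).-1 = ((n.+1 - c).-1).+1 by lia.
  by rewrite expnS mulnCA.
have := IH isT; have -> : n.+2 - n.+1 = 1 by lia.
rewrite expn0 muln1.
case: (ltnP d n.+1) => hdn.
  have -> : n.+2 - d.+1 = (n.+1 - d.+1).+1 by lia.
  rewrite expnS; lia.
have -> : n.+2 - d.+1 = 0 by lia.
have -> : n.+1 - d.+1 = 0 by lia.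
rewrite expn0; lia.
Qed.

Lemma S_split n : 0 < n ->
  V (fun _ => 1) n 0 = 1 + \sum_(1 <= c < n) (c - 1 < d) * 2 ^ (n - c).-1
                         + \sum_(1 <= c < n) (d < c) * 2 ^ (n - c).-1.
Proof.
move=> n0; rewrite V_rec // -addnA -big_split; congr (_ + _).
apply: eq_big_nat => c /andP[c1 cn].
rewrite V_const; last lia.
case: (ltnP d c) => h /=; [have -> : (c - 1 < d) = false by lia | have -> : (c - 1 < d) = true by lia]; lia.
Qed.

Lemma A_le_K n : 0 < n ->
  V gn n 0 <= \sum_(1 <= c < n) (c - 1 < d) * 2 ^ (n - c).-1.
Proof.
move=> n0; have h1 := AZ n; have h2 := S_split n0; have h3 := J_closed n0.
have h4 := Z_big n0; lia.
Qed.

Lemma small_gaps_cons a m : m != [::] ->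
  small_gaps d (a :: m) = (a - head 0 m < d) + small_gaps d m.
Proof.
case: m => // y m _; rewrite /small_gaps /=.
have -> : iota 1 (size m) = map (addn 1) (iota 0 (size m)) by exact: (iotaDl 1 0).
rewrite count_map; congr (_ + _).
Qed.

Lemma LH_rec n : 0 < n ->
  \sum_(s <- Hl n) small_gaps d s =
  \sum_(1 <= c < n) (c - 1 < d) * 2 ^ (n - c).-1
  + \sum_(1 <= c < n) \sum_(s <- Hl (n - c)) small_gaps d s.
Proof.
move=> n0; rewrite sumHl //.
have -> : small_gaps d [:: n] = 0 by [].
rewrite add0n -big_split; apply: eq_big_nat => c /andP[c1 cn].
rewrite -(V_const 0 (_ : 0 < n - c)); last lia.
rewrite /V big_distrr -big_split; apply: eq_big_seq => m hm.
rewrite small_gaps_cons; last by move: hm; rewrite Hl_mem => /inH_pos [].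
rewrite /= muln1; congr (nat_of_bool _ + _); congr (_ < _); lia.
Qed.

Lemma RH_rec n : 0 < n ->
  \sum_(s <- Hl n) parts_not_1_mod d s =
  V gn n 0 + \sum_(1 <= c < n) \sum_(s <- Hl (n - c)) parts_not_1_mod d s.
Proof.
move=> n0; rewrite sumHl // /V sumHl // -addnA -big_split; congr (_ + _).
  by rewrite /= addn0 /gn addn0.
apply: eq_big_nat => c _; rewrite -big_split; apply: eq_bigr => m _ /=.
by rewrite addn0.
Qed.

Lemma main_ineq n :
  \sum_(s <- Hl n) parts_not_1_mod d s <= \sum_(s <- Hl n) small_gaps d s.
Proof.
elim/ltn_ind: n => n IH.
case: n IH => [|n] IH; first by rewrite HlE !big_nil.
rewrite RH_rec // LH_rec //; apply: leq_add; first exact: A_le_K.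
rewrite big_nat_cond [X in _ <= X]big_nat_cond; apply: leq_sum => c /andP[/andP[c1 cn] _].
apply: IH; lia.
Qed.
End Main.

Theorem theorem1p4 (d n : nat) (hd : 1 <= d) (hn : 1 <= n) :
  sumH n (parts_not_1_mod d) <= sumH n (small_gaps d).
Proof. rewrite !sumH_Hl; exact: main_ineq. Qed.
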